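(* Let $\mathcal{D}$ be a Steiner $2$-design $S(2,k,v)$ that has a parallel class, and let $G_1$ be its $1$-block intersection graph $1$-$\mathrm{BIG}(\mathcal{D})$. If $G_1$ is silver, then $k^2 \mid v$.
   Context: A $2$-$(v,k,\lambda)$ design ($2<k<v$) is a pair $(V,\mathcal{B})$ where $V$ is a $v$-set and $\mathcal{B}$ is a collection of $k$-subsets of $V$ (blocks) such that every $2$-subset of $V$ lies in exactly $\lambda$ blocks; a Steiner $2$-design $S(2,k,v)$ is a $2$-$(v,k,1)$ design. A parallel class is a set of blocks partitioning $V$. For a design $\mathcal{D}$ and integer $i\ge 0$, the $i$-block intersection graph $i$-$\mathrm{BIG}(\mathcal{D})$ has the blocks as vertices, two blocks adjacent iff they intersect in exactly $i$ elements. An $\alpha$-set of a graph is a maximum independent set. Let $G$ be an $r$-regular graph and $c$ a proper $(r+1)$-coloring of $G$. A vertex $x$ is rainbow with respect to $c$ if every one of the $r+1$ colors appears on the closed neighborhood $N[x]=N(x)\cup\{x\}$. Given an $\alpha$-set $I$, $c$ is silver with respect to $I$ if every $x\in I$ is rainbow; $G$ is silver if it admits a silver coloring with respect to some $\alpha$-set. (The $1$-BIG of an $S(2,k,v)$ is regular, of degree $k(v-k)/(k-1)$.) *)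

(* Defs.v *)
From mathcomp Require Import all_boot.
Set Implicit Arguments. Unset Strict Implicit. Unset Printing Implicit Defensive.

(* (V, B) is a Steiner 2-design S(2,k,v) with v = #|V| and 2 < k < v.
   Blocks form a set (a 2-(v,k,1) design has no repeated blocks). *)
Definition steiner2 (V : finType) (k : nat) (B : {set {set V}}) : Prop :=
  [/\ 2 < k, k < #|V|,
      (forall b, b \in B -> #|b| = k) &
      (forall x y : V, x != y -> #|[set b in B | (x \in b) && (y \in b)]| = 1)].

Definition has_parallel_class (V : finType) (B : {set {set V}}) : Prop :=
  exists P : {set {set V}}, P \subset B /\ partition P [set: V].

Definition block (V : finType) (B : {set {set V}}) := {b : {set V} | b \in B}.

Definition BIG (V : finType) (B : {set {set V}}) (i : nat) : rel (block B) :=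
  fun b1 b2 => #|(val b1) :&: (val b2)| == i.
Arguments BIG {V} B i.

Definition independent (T : finType) (e : rel T) (I : {set T}) : Prop :=
  forall x y, x \in I -> y \in I -> ~~ e x y.

Definition alpha_set (T : finType) (e : rel T) (I : {set T}) : Prop :=
  independent e I /\ forall J : {set T}, independent e J -> #|J| <= #|I|.

Definition regular (T : finType) (e : rel T) (r : nat) : Prop :=
  forall x : T, #|[set y | e x y]| = r.

Definition proper_coloring (T : finType) (e : rel T) (r : nat) (c : T -> 'I_r.+1) : Prop :=
  forall x y, e x y -> c x != c y.

Definition rainbow (T : finType) (e : rel T) (r : nat) (c : T -> 'I_r.+1) (x : T) : Prop :=
  forall col : 'I_r.+1, exists y : T, ((y == x) || e x y) && (c y == col).

Definition silver_wrt (T : finType) (e : rel T) (r : nat) (c : T -> 'I_r.+1) (I : {set T}) : Prop :=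
  proper_coloring e c /\ forall x, x \in I -> rainbow e c x.

Definition silver (T : finType) (e : rel T) : Prop :=
  exists r : nat, regular e r /\
    exists I : {set T}, alpha_set e I /\
      exists c : T -> 'I_r.+1, silver_wrt e c I.

(* Main.v *)
Require Import Defs.
From mathcomp Require Import all_boot.
From Stdlib Require Import Lia Psatz.
Set Implicit Arguments. Unset Strict Implicit. Unset Printing Implicit Defensive.

Lemma card_sumb (T : finType) (A : {set T}) (R : pred T) :
  #|[set y in A | R y]| = \sum_(y in A) (R y : nat).
Proof.
rewrite -sum1_card big_mkcond /= [RHS]big_mkcond /=.
apply: eq_bigr => y _; rewrite !inE; by case: (y \in A); case: (R y).
Qed.

Lemma dc (T U : finType) (A : {set T}) (B : {set U}) (R : T -> U -> bool) :
  \sum_(x in A) #|[set y in B | R x y]| = \sum_(y in B) #|[set x in A | R x y]|.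
Proof.
under eq_bigr do rewrite card_sumb.
under [RHS]eq_bigr do rewrite card_sumb.
exact: exchange_big.
Qed.

Lemma le1_nat n : n <= 1 -> n = (n == 1).
Proof. by case: n => [|[|]]. Qed.

Lemma trans_card (V : finType) (B : {set {set V}}) (Q : pred {set V}) :
  #|[set b : block B | Q (val b)]| = #|[set b in B | Q b]|.
Proof.
rewrite -(card_imset _ val_inj); apply: eq_card => b.
rewrite !inE; apply/imsetP/andP.
  by case=> x; rewrite inE => Hx ->; split => //; exact: valP.
case=> Hb HQ; exists (exist _ b Hb) => //; by rewrite inE.
Qed.

Theorem theorem1 (V : finType) (k : nat) (B : {set {set V}}) :
  steiner2 k B -> has_parallel_class B -> silver (BIG B 1) ->
  (k ^ 2 %| #|V|)%N.
Proof.
move=> [k2 kv Bk Bst] [P [PB Ppart]] [r [reg [I [[indI maxI] [c [_ rainb]]]]]].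
have F1 : forall b1 b2, b1 \in B -> b2 \in B -> b1 != b2 -> #|b1 :&: b2| <= 1.
  move=> b1 b2 H1 H2 Hne; rewrite leqNgt; apply/negP => /card_gt1P [x [y [Hx Hy Hxy]]].
  move: Hx Hy; rewrite !inE => /andP [x1 x2] /andP [y1 y2].
  have := Bst x y Hxy => /eqP /cards1P [z Hz].
  have : b1 \in [set b in B | (x \in b) && (y \in b)] by rewrite !inE H1 x1 y1.
  have : b2 \in [set b in B | (x \in b) && (y \in b)] by rewrite !inE H2 x2 y2.
  rewrite Hz !inE => /eqP E2 /eqP E1; by rewrite E1 E2 eqxx in Hne.
have Fb : forall x y : block B, x != y -> #|val x :&: val y| <= 1.
  move=> x y Hxy; apply: F1; try exact: valP.
  by apply: contra Hxy => /eqP/val_inj ->.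
have ekk : forall x : block B, ~~ BIG B 1 x x.
  by move=> x; rewrite /BIG setIid Bk ?(valP x) //; case: k k2 {kv Bk Bst F1 Fb}=> [|[|]].
have disjI : forall x y, x \in I -> y \in I -> x != y -> #|val x :&: val y| = 0.
  move=> x y Hx Hy Hxy; have := Fb _ _ Hxy; have := indI _ _ Hx Hy.
  by rewrite /BIG; case: #|_| => [|[|]].
have cardP : #|V| = #|P| * k.
  rewrite -cardsT (card_partition Ppart) -sum_nat_const; apply: eq_bigr => A HA.
  by apply: Bk; apply: (subsetP PB).
have PI : #|P| <= #|I|.
  have -> : #|P| = #|[set b : block B | val b \in P]|.
    rewrite trans_card; apply: eq_card => b; rewrite !inE.
    apply/idP/andP => [H|[_ H]]; [split=> //; exact: (subsetP PB)|exact: H].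
  apply: maxI => x y; rewrite !inE => Hx Hy.
  case: (eqVneq x y) => [->|Hxy]; first exact: ekk.
  move: Ppart => /and3P [_ /trivIsetP Htr _].
  have Hne : val x != val y by apply: contra Hxy => /eqP/val_inj ->.
  have := Htr _ _ Hx Hy Hne; rewrite -setI_eq0 -cards_eq0 /BIG => /eqP ->; done.
pose I' := [set val x | x in I].
have I'tr : trivIset I'.
  apply/trivIsetP => A C /imsetP [x Hx ->] /imsetP [y Hy ->] Hne.
  have Hxy : x != y by apply: contra Hne => /eqP ->.
  by rewrite -setI_eq0 -cards_eq0 disjI.
have sumI' : \sum_(A in I') #|A| = #|I| * k.
  rewrite -(card_imset _ val_inj) -sum_nat_const; apply: eq_bigr => A /imsetP [x _ ->].
  by apply: Bk; apply: valP.
have IV : #|I| * k <= #|V|.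
  by rewrite -sumI' (eqP I'tr) max_card.
have cardI : #|V| = #|I| * k.
  apply/eqP; rewrite eqn_leq IV cardP leq_mul2r PI orbT //.
have covI : cover I' = setT.
  apply/eqP; rewrite eqEcard subsetT /= cardsT cardI -sumI' (eqP I'tr) //.
have cntI : forall p, #|[set x in I | p \in val x]| = 1.
  move=> p; have : p \in cover I' by rewrite covI inE.
  move=> /bigcupP [A /imsetP [x Hx ->] Hp].
  rewrite -(cards1 x); apply: eq_card => y; rewrite !inE.
  apply/andP/eqP => [[Hy Hpy]|->]; last by [].
  apply/eqP; apply: contraT => Hne.
  have := disjI _ _ Hy Hx Hne => /eqP; rewrite cards_eq0 => /eqP E.
  have H : p \in val y :&: val x by rewrite inE Hpy Hp.
  by rewrite E inE in H.
have degI : forall y, y \notin I -> #|[set x in I | BIG B 1 x y]| = k.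
  move=> y Hy.
  have := dc (val y) I (fun p (x : block B) => p \in val x).
  rewrite (eq_bigr (fun _ => 1)); last by move=> p _; apply: cntI.
  rewrite sum1_card Bk ?(valP y) // => ->.
  rewrite card_sumb; apply: eq_bigr => x Hx.
  have Hxy : x != y by apply: contra Hy => /eqP <-.
  have -> : #|[set p in val y | p \in val x]| = #|val x :&: val y|.
    by apply: eq_card => p; rewrite !inE andbC.
  by rewrite /BIG [RHS](le1_nat (Fb _ _ Hxy)).
have deg : forall x : block B, r * (k - 1) = (#|V| - k) * k.
  move=> x.
  have Hq : forall q, q \notin val x ->
      #|[set b in [set b : block B | q \in val b] | BIG B 1 x b]| = k.
    move=> q Hq.
    have := dc (val x) [set b : block B | q \in val b] (fun p b => p \in val b).
    rewrite (eq_bigr (fun _ => 1)); last first.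
      move=> p Hp; have Hpq : p != q by apply: contraNneq Hq => <-.
      rewrite -(Bst _ _ Hpq) -(trans_card B (fun b => (p \in b) && (q \in b))).
      by apply: eq_card => b; rewrite !inE andbC.
    rewrite sum1_card Bk ?(valP x) // => ->.
    rewrite card_sumb; apply: eq_bigr => b; rewrite inE => Hb.
    have Hxb : x != b by apply: contraNneq Hq => ->.
    have -> : #|[set p in val x | p \in val b]| = #|val x :&: val b|.
      by apply: eq_card => p; rewrite !inE.
    by rewrite /BIG [RHS](le1_nat (Fb _ _ Hxb)).
  have := dc (~: val x) [set b | BIG B 1 x b] (fun q b => q \in val b).
  rewrite (eq_bigr (fun _ => k)); last first.
    move=> q; rewrite inE => Hq'; rewrite -(Hq q Hq').
    by apply: eq_card => b; rewrite !inE andbC.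
  rewrite sum_nat_const (eq_bigr (fun _ => k - 1)); last first.
    move=> b; rewrite inE => Hb.
    have -> : #|[set q in ~: val x | q \in val b]| = #|val b :\: val x|.
      by apply: eq_card => q; rewrite !inE andbC.
    by rewrite cardsD setIC (eqP Hb) Bk ?(valP b).
  rewrite sum_nat_const -(reg x) => <-.
  by have := cardsC (val x); rewrite Bk ?(valP x) // => <-; rewrite addKn.
have I2 : 1 < #|I|.
  rewrite ltnNge; apply/negP => H; move: kv; rewrite cardI ltnNge.
  by rewrite -{2}(mul1n k) leq_mul2r H orbT.
have [x0 Hx0] : exists x0, x0 \in I by apply/card_gt0P; exact: ltnW.
have rI : #|I| <= r.
  have := deg x0; rewrite cardI.
  move: I2 k2; set n := #|I| => I2' k2' E.
  rewrite leqNgt; apply/negP => Hr.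
  move/ltP: I2'; move/ltP: k2'; move/ltP: Hr => Hr' I2'' k2''.
  rewrite -!multE -!minusE in E. nia.
have one : forall x col, x \in I ->
    #|[set y in [set y | (y == x) || BIG B 1 x y] | c y == col]| = 1.
  move=> x col Hx; set N := [set y | (y == x) || BIG B 1 x y].
  have cN : #|N| = r.+1.
    have -> : N = x |: [set y | BIG B 1 x y] by apply/setP => y; rewrite !inE.
    by rewrite cardsU1 inE (negbTE (ekk x)) reg.
  have cI : #|c @: N| = #|N|.
    apply/eqP; rewrite eqn_leq leq_imset_card cN /=.
    apply: (@leq_trans #|[set: 'I_r.+1]|); first by rewrite cardsT card_ord.
    apply: subset_leq_card; apply/subsetP => col' _.
    have [y /andP [Hy /eqP <-]] := rainb x Hx col'.
    by apply/imsetP; exists y => //; rewrite inE.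
  have /imset_injP inj : #|c @: N| == #|N| by rewrite cI.
  have [y0 /andP [Hy0 /eqP Hc0]] := rainb x Hx col.
  rewrite -(cards1 y0); apply: eq_card => y; rewrite !inE.
  apply/andP/eqP => [[Hy /eqP Hc]|->]; last by rewrite Hy0 Hc0.
  by apply: inj; rewrite ?inE // Hc Hc0.
have /existsP [col Hcol] : [exists col, col \notin c @: I].
  rewrite -negb_forall; apply/negP => /forallP H.
  have : #|[set: 'I_r.+1]| <= #|c @: I|.
    by apply: subset_leq_card; apply/subsetP => col' _; apply: H.
  rewrite cardsT card_ord => H1.
  have := leq_trans H1 (leq_trans (leq_imset_card c I) rI).
  by rewrite ltnn.
pose C := [set y | c y == col].
have := dc I C (fun x y => (y == x) || BIG B 1 x y).
rewrite (eq_bigr (fun _ => 1)); last first.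
  move=> x Hx; rewrite -[RHS](one x col Hx); apply: eq_card => y; rewrite !inE andbC //.
rewrite sum1_card (eq_bigr (fun _ => k)); last first.
  move=> y; rewrite inE => /eqP Hy.
  have HyI : y \notin I by apply: contra Hcol => HI; apply/imsetP; exists y.
  rewrite -(degI y HyI); apply: eq_card => x; rewrite !inE.
  case Hx: (x \in I) => //=.
  have -> : (y == x) = false by apply/negP => /eqP E; rewrite E Hx in HyI.
  rewrite /BIG setIC //.
rewrite sum_nat_const => EI.
by rewrite cardI EI -mulnA; apply/dvdnP; exists #|C|; rewrite expnS expn1 mulnA.
Qed.
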